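(* Let $m_0,\dots,m_{k-1}$ be models and let $D$ be a set of i.i.d. games between them, each game being labelled as belonging to a given task or not; let $D_{\text{task}}\subset D$ be the games belonging to the task and $D_{\neg\text{task}}\subset D$ those not belonging to it. Let $\mathbf{R}_{\text{task}}$, resp. $\mathbf{R}_{\neg\text{task}}$, be the rating vector obtained by fitting the games in $D_{\text{task}}$, resp. $D_{\neg\text{task}}$, with the optimal univariate rating system, i.e. a minimizer over $\mathbb{R}^k$ of the logistic loss $\mathcal{L}(D_{\text{task}},\cdot)$, resp. $\mathcal{L}(D_{\neg\text{task}},\cdot)$. Let $\mathbf{R}'$ be the Polyrating fit on all of $D$ with parameters $R'^{m}_{\neg\text{task}}$ and $\beta^m_1$ for each model $m$, using the formula $R'^m(g)=R'^m_{\neg\text{task}}+\beta^m_1\,[g\in D_{\text{task}}]$ and independent priors $\mathcal{N}(0,\sigma_{\neg\text{task}}^2)$ on each $R'^m_{\neg\text{task}}$ and $\mathcal{N}(0,\sigma_1^2)$ on each $\beta^m_1$; that is, $\mathbf{R}'$ minimizes $$\mathcal{L}(D_{\neg\text{task}},\mathbf{R}'_{\neg\text{task}})+\mathcal{L}(D_{\text{task}},\mathbf{R}'_{\text{task}})+\sum_{m}\frac{(R'^m_{\neg\text{task}})^2}{2\sigma_{\neg\text{task}}^2}+\sum_m\frac{(\beta^m_1)^2}{2\sigma_1^2},$$ where $R'^m_{\text{task}}:=R'^m_{\neg\text{task}}+\beta^m_1$. Then, as $|D_{\neg\text{task}}|\to\infty$ and $|D_{\text{task}}|\to\infty$, $\mathbf{R}_{\text{task}}$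 and $\mathbf{R}'_{\text{task}}$ converge, up to a constant difference, to the same optimal rating $\mathbf{R}^*_{\text{task}}$, provided all optimal ratings are finite. Similarly, $\mathbf{R}_{\neg\text{task}}$ and $\mathbf{R}'_{\neg\text{task}}$ converge, up to a constant difference, to the same optimal rating $\mathbf{R}^*_{\neg\text{task}}$, provided all optimal ratings are finite.
   Context: A game $g$ consists of two distinct models $g_{m_a},g_{m_b}$ and a result $g_r\in\{0,\tfrac12,1\}$ ($1$ if $g_{m_a}$ wins, $0$ if it loses, $\tfrac12$ for a draw). For a set $S$ of games and a rating vector $\mathbf{R}\in\mathbb{R}^k$, the logistic loss is $\mathcal{L}(S,\mathbf{R})=\sum_{g\in S}\big[-g_r\log\operatorname{sig}(\tfrac{R^{g_{m_a}}-R^{g_{m_b}}}{400})-(1-g_r)\log(1-\operatorname{sig}(\tfrac{R^{g_{m_a}}-R^{g_{m_b}}}{400}))\big]$ with $\operatorname{sig}(x)=1/(1+e^{-x})$. The optimal rating $\mathbf{R}^*_{\text{task}}$ (resp. $\mathbf{R}^*_{\neg\text{task}}$) is the minimizer of the expected logistic loss $\mathbf{R}\mapsto\mathbb{E}_g[\mathcal{L}(\{g\},\mathbf{R})]$ where $g$ is drawn from the distribution of games belonging (resp. not belonging) to the task. Ratings are only determined up to an additive constant, since adding a constant to all entries of $\mathbf{R}$ leaves $\mathcal{L}$ unchanged. *)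

(* Defs.v *)
From HB Require Import structures.
From mathcomp Require Import all_boot all_order all_algebra.
From mathcomp Require Import all_classical all_reals all_analysis.

Set Implicit Arguments.
Unset Strict Implicit.
Unset Printing Implicit Defensive.

Import Order.TTheory GRing.Theory Num.Theory.
Import numFieldNormedType.Exports.
Local Open Scope classical_set_scope.
Local Open Scope ring_scope.

(* A game between models 'I_k: (m_a, m_b, result code) with m_a <> m_b.
   Result code i : 'I_3 encodes g_r = i/2, i.e. 0 (loss of m_a), 1/2 (draw), 1 (win of m_a). *)
Definition game (k : nat) := {g : 'I_k * 'I_k * 'I_3 | g.1.1 != g.1.2}.

Definition gma k (g : game k) : 'I_k := (val g).1.1.
Definition gmb k (g : game k) : 'I_k := (val g).1.2.
Definition gres {R : realType} k (g : game k) : R := ((val g).2 : nat)%:R / 2.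

Definition sigmoid {R : realType} (x : R) : R := 1 / (1 + expR (- x)).

Definition rating (R : realType) (k : nat) := 'I_k -> R.

Definition game_loss {R : realType} k (g : game k) (Rt : rating R k) : R :=
  let d := (Rt (gma g) - Rt (gmb g)) / 400 in
  - gres g * ln (sigmoid d) - (1 - gres g) * ln (1 - sigmoid d).

Definition loss {R : realType} k (S : seq (game k)) (Rt : rating R k) : R :=
  \sum_(g <- S) game_loss g Rt.

Definition is_minimizer {R : realType} {T : Type} (f : T -> R) (x : T) : Prop :=
  forall y, f x <= f y.

(* Sequence X of random labelled games (label true = belongs to the task) is i.i.d.
   with common law p: the joint law of (X_0,...,X_{n-1}) is the product of p. *)
Definition iid_seq {d} {Omega : measurableType d} {R : realType} {V : finType}
  (P : probability Omega R) (X : nat -> Omega -> V) (p : V -> R) : Prop :=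
  (forall i v, measurable (X i @^-1` [set v])) /\
  (forall (n : nat) (v : 'I_n -> V),
      P (\bigcap_(i in [set j : 'I_n | True]) (X i @^-1` [set v i])) =
      (\prod_(i < n) p (v i))%:E).

Definition D_task {Omega : Type} k (X : nat -> Omega -> game k * bool) (n : nat) (w : Omega)
  : seq (game k) := [seq (X i w).1 | i <- iota 0 n & (X i w).2].
Definition D_ntask {Omega : Type} k (X : nat -> Omega -> game k * bool) (n : nat) (w : Omega)
  : seq (game k) := [seq (X i w).1 | i <- iota 0 n & ~~ (X i w).2].

Definition exp_loss {R : realType} k (p : game k * bool -> R) (b : bool) (Rt : rating R k) : R :=
  \sum_(g : game k) (p (g, b) / (\sum_(h : game k) p (h, b))) * game_loss g Rt.

Definition polyrating_obj {R : realType} k (sn s1 : R) (Dn Dt : seq (game k))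
  (x : rating R k * rating R k) : R :=
  loss Dn x.1 + loss Dt (fun m => x.1 m + x.2 m)
  + \sum_(m < k) (x.1 m) ^+ 2 / (2 * sn ^+ 2)
  + \sum_(m < k) (x.2 m) ^+ 2 / (2 * s1 ^+ 2).

Definition cvg_up_to_const {R : realType} k (u : nat -> rating R k) (v : rating R k) : Prop :=
  exists c : nat -> R, forall m : 'I_k, (fun n => u n m + c n) @ \oo --> (v m : R).

Definition optimal_up_to_const {R : realType} k (f : rating R k -> R) (v : rating R k) : Prop :=
  forall w, is_minimizer f w <-> exists c : R, forall m, w m = v m + c.

(* Main.v *)
Require Import Defs.
From HB Require Import structures.
From mathcomp Require Import all_boot all_order all_algebra.
From mathcomp Require Import all_classical all_reals all_analysis.
From mathcomp Require Import ring lra.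
Unset Printing Implicit Defensive.
Import Order.TTheory GRing.Theory Num.Theory.
Import numFieldNormedType.Exports.
Local Open Scope classical_set_scope.
Local Open Scope ring_scope.
Section S. Variable R : realType.
Lemma expR_le_quad (x : R) : `|x| <= 2^-1 -> expR x <= 1 + x + 2 * x ^+ 2.
Proof.
move=> hx.
have h := expR_ge1Dx (- x).
have hx' : x <= 2^-1 by rewrite (le_trans (ler_norm x)).
have p : 0 < 1 - x by lra.
rewrite expRN in h.
have e0 := expR_gt0 x.
have h2 : (1 - x) * expR x <= 1.
  by have := ler_wpM2r (ltW e0) h; rewrite mulVf ?gt_eqF.
have h3 : 0 <= x ^+ 2 * (1 - 2 * x).
  apply: mulr_ge0; [exact: sqr_ge0| lra].
nra.
Qed.
End S.
Arguments expR_le_quad {R}.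
Section S2. Variable R : realType.
Lemma eqle (x y : R) : x = y -> x <= y. Proof. by move->. Qed.
Lemma expR_conv (a b t : R) : 0 <= t -> t <= 1 ->
  expR ((1 - t) * a + t * b) <= (1 - t) * expR a + t * expR b.
Proof.
move=> t0 t1.
set m := (1 - t) * a + t * b.
have ea : expR a = expR m * expR (a - m) by rewrite -expRD; congr expR; ring.
have eb : expR b = expR m * expR (b - m) by rewrite -expRD; congr expR; ring.
have ha := expR_ge1Dx (a - m); have hb := expR_ge1Dx (b - m).
have e0 := expR_gt0 m.
have h1 : 1 <= (1 - t) * expR (a - m) + t * expR (b - m).
  have hm : (1 - t) * (a - m) + t * (b - m) = 0 by rewrite /m; ring.
  nra.
have := ler_wpM2l (ltW e0) h1; rewrite mulr1 => H; apply: le_trans H _.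
by rewrite ea eb; apply: eqle; ring.
Qed.

Definition sp (x : R) : R := @ln R (1 + @expR R x).

Lemma sp_pos (x : R) : 0 < 1 + expR x.
Proof. have := expR_gt0 x; lra. Qed.

Lemma sp_conv (a b t : R) : 0 <= t -> t <= 1 ->
  sp ((1 - t) * a + t * b) <= (1 - t) * sp a + t * sp b.
Proof.
move=> t0 t1.
set m := (1 - t) * a + t * b.
set al := sp a; set be := sp b.
have eal : expR al = 1 + expR a by rewrite /al /sp lnK // posrE sp_pos.
have ebe : expR be = 1 + expR b by rewrite /be /sp lnK // posrE sp_pos.
set M := (1 - t) * al + t * be.
suff : 1 + expR m <= expR M.
  by move=> h; rewrite /sp -[M]expRK ler_ln ?posrE ?sp_pos ?expR_gt0.
have h1 := expR_conv (- al) (- be) t t0 t1.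
have h2 := expR_conv (a - al) (b - be) t t0 t1.
have e1 : (1 - t) * - al + t * - be = - M by rewrite /M; ring.
have e2 : (1 - t) * (a - al) + t * (b - be) = m - M by rewrite /M /m; ring.
rewrite e1 e2 in h1 h2.
have s : expR (- M) + expR (m - M) <= 1.
  apply: le_trans (lerD h1 h2) _.
  rewrite !expRD !expRN eal ebe.
  have pa := sp_pos a; have pb := sp_pos b.
  apply: eqle; field; rewrite ?gt_eqF //.
have eM := expR_gt0 M.
have := ler_wpM2l (ltW eM) s; rewrite mulr1 mulrDr -!expRD.
by rewrite subrr expR0 [M + _]addrC subrK.
Qed.
End S2.
Arguments sp {R}. Arguments sp_pos {R}. Arguments expR_conv {R}. Arguments sp_conv {R}. Arguments eqle {R}.
Section S3. Variable R : realType.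
Variable k : nat.
Implicit Types (g : game k) (x y : rating R k).

Definition gd g x : R := (x (gma g) - x (gmb g)) / 400.

Lemma ln_inv1p (x : R) : ln (1 / (1 + expR x)) = - sp x.
Proof. by rewrite mul1r lnV // posrE sp_pos. Qed.

Lemma game_lossE g x : game_loss g x = gres g * sp (- gd g x) + (1 - gres g) * sp (gd g x).
Proof.
rewrite /game_loss -/(gd g x).
have e1 : sigmoid (gd g x) = 1 / (1 + expR (- gd g x)) by [].
have e2 : 1 - sigmoid (gd g x) = 1 / (1 + expR (gd g x)).
  rewrite e1 expRN.
  have := expR_gt0 (gd g x) => h.
  have h' : 0 < (expR (gd g x))^-1 by rewrite invr_gt0.
  field; rewrite ?gt_eqF //; try lra.
rewrite e1 e2 !ln_inv1p; ring.
Qed.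

Lemma gres_ge0 g : 0 <= gres g :> R.
Proof. by rewrite /gres divr_ge0. Qed.

Lemma gres_le1 g : gres g <= 1 :> R.
Proof.
rewrite /gres ler_pdivrMr // mul1r.
have := ltn_ord (val g).2; move: ((val g).2 : nat) => i hi.
by rewrite ler_nat; move: hi; case: i => [|[|[|]]].
Qed.

Lemma sp_gt0 (x : R) : 0 < sp x.
Proof. by rewrite /sp ln_gt0 // ltrDl expR_gt0. Qed.

Lemma game_loss_ge0 g x : 0 <= game_loss g x.
Proof.
rewrite game_lossE; have := gres_ge0 g; have := gres_le1 g.
have := sp_gt0 (- gd g x); have := sp_gt0 (gd g x). nra.
Qed.

Lemma game_loss_shift g x c : game_loss g (fun m => x m + c) = game_loss g x.
Proof.
by rewrite !game_lossE /gd; congr (_ * sp _ + _ * sp _); [congr (- (_ / _))|congr (_ / _)]; ring.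
Qed.

Lemma game_loss_conv g x y t : 0 <= t -> t <= 1 ->
  game_loss g (fun m => (1 - t) * x m + t * y m) <=
  (1 - t) * game_loss g x + t * game_loss g y.
Proof.
move=> t0 t1; rewrite !game_lossE.
have ed : gd g (fun m => (1 - t) * x m + t * y m) = (1 - t) * gd g x + t * gd g y.
  by rewrite /gd; field.
have ed' : - gd g (fun m => (1 - t) * x m + t * y m) = (1 - t) * (- gd g x) + t * (- gd g y).
  by rewrite ed; ring.
rewrite ed' ed.
have h1 := sp_conv (- gd g x) (- gd g y) t t0 t1.
have h2 := sp_conv (gd g x) (gd g y) t t0 t1.
have := gres_ge0 g; have := gres_le1 g => a1 a0.
have : gres g * sp ((1 - t) * - gd g x + t * - gd g y) <=
   gres g * ((1 - t) * sp (- gd g x) + t * sp (- gd g y)) by exact: ler_wpM2l.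
have : (1 - gres g) * sp ((1 - t) * gd g x + t * gd g y) <=
   (1 - gres g) * ((1 - t) * sp (gd g x) + t * sp (gd g y)).
  by apply: ler_wpM2l => //; lra.
move=> hA hB. apply: le_trans (lerD hB hA) _; apply: eqle; ring.
Qed.

Lemma sp_continuous : continuous (@sp R).
Proof.
move=> x; rewrite /sp.
have h1 : {for x, continuous (fun x : R => 1 + expR x)}.
  by apply: continuousD; [exact: cst_continuous| exact: continuous_expR].
have h2 : {for (1 + expR x), continuous (@ln R)}.
  by apply: continuous_ln; exact: sp_pos.
exact: (@continuous_comp R R R (fun z : R => 1 + expR z) (@ln R) x h1 h2).
Qed.

Lemma cM (T : topologicalType) (f h : T -> R) : continuous f -> continuous h ->
  continuous (fun u => f u * h u).
Proof. by move=> hf hh x; exact: (@continuousM R T f h x (hf x) (hh x)). Qed.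
Lemma cD (T : topologicalType) (f h : T -> R) : continuous f -> continuous h ->
  continuous (fun u => f u + h u).
Proof. by move=> hf hh x; exact: (@continuousD R R^o T f h x (hf x) (hh x)). Qed.
Lemma cB (T : topologicalType) (f h : T -> R) : continuous f -> continuous h ->
  continuous (fun u => f u - h u).
Proof. by move=> hf hh x; exact: (@continuousB R R^o T f h x (hf x) (hh x)). Qed.
Lemma cN (T : topologicalType) (f : T -> R) : continuous f -> continuous (fun u => - f u).
Proof. by move=> hf x; exact: (@continuousN R R^o T f x (hf x)). Qed.
Lemma cC (T : topologicalType) (c : R) : continuous (fun _ : T => c).
Proof. by move=> x; exact: cst_continuous. Qed.
Lemma cO (T : topologicalType) (f : T -> R) (h : R -> R) : continuous f -> continuous h ->
  continuous (fun u => h (f u)).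
Proof. by move=> hf hh x; exact: (@continuous_comp T R R f h x (hf x) (hh (f x))). Qed.

Lemma game_loss_continuous g :
  continuous (fun u : 'rV[R]_k => game_loss g (fun m => u ord0 m)).
Proof.
have hd : continuous (fun u : 'rV[R]_k => gd g (fun m => u ord0 m)).
  rewrite /gd; apply: cM; last exact: cC.
  by apply: cB; exact: coord_continuous.
rewrite (_ : (fun _ => _) = (fun u : 'rV[R]_k => gres g * sp (- gd g (fun m => u ord0 m)) +
   (1 - gres g) * sp (gd g (fun m => u ord0 m)))); last by apply/funext => v; rewrite game_lossE.
apply: cD; apply: cM; try exact: cC.
  by apply: cO; [apply: cN; exact: hd| exact: sp_continuous].
by apply: cO; [exact: hd| exact: sp_continuous].
Qed.
End S3.
Section MEst.
Variables (R : realType) (k : nat) (G : finType) (f : G -> rating R k -> R).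
Hypothesis f_ge0 : forall g x, 0 <= f g x.
Hypothesis f_shift : forall g x c, f g (fun m => x m + c) = f g x.
Hypothesis f_conv : forall g x y t, 0 <= t -> t <= 1 ->
  f g (fun m => (1 - t) * x m + t * y m) <= (1 - t) * f g x + t * f g y.
Hypothesis f_cont : forall g, continuous (fun u : 'rV[R]_k => f g (fun m => u ord0 m)).
Variables (wn : nat -> G -> R) (w : G -> R) (v : rating R k) (m0 : 'I_k).
Hypothesis wn_ge0 : forall n g, 0 <= wn n g.
Hypothesis w_ge0 : forall g, 0 <= w g.
Hypothesis wn_cvg : forall g, (fun n => wn n g) @ \oo --> w g.
Definition Fw (x : rating R k) := \sum_g w g * f g x.
Definition Fn n (x : rating R k) := \sum_g wn n g * f g x.
Hypothesis v_min : forall y, Fw v <= Fw y.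
Hypothesis v_uniq : forall y, Fw y <= Fw v -> exists c, forall m, y m = v m + c.

Definition nrm (y : rating R k) : rating R k := fun m => y m + (v m0 - y m0).

Lemma Fn_shift n y c : Fn n (fun m => y m + c) = Fn n y.
Proof. by apply: eq_bigr => g _; rewrite f_shift. Qed.

Lemma Fn_nrm n y : Fn n (nrm y) = Fn n y.
Proof. exact: Fn_shift. Qed.

Lemma Fn_conv n x y t : 0 <= t -> t <= 1 ->
  Fn n (fun m => (1 - t) * x m + t * y m) <= (1 - t) * Fn n x + t * Fn n y.
Proof.
move=> t0 t1; rewrite /Fn !mulr_sumr -big_split /=; apply: ler_sum => g _.
apply: le_trans (ler_wpM2l (wn_ge0 n g) (f_conv g x y t t0 t1)) _.
by apply: eqle; ring.
Qed.

Definition box r := [set u : 'rV[R]_k | forall i, `[v i - r, v i + r]%classic (u ord0 i)].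

Lemma box_compact r : compact (box r).
Proof. exact: (@rV_compact R k (fun i => `[v i - r, v i + r]%classic) (fun i => @segment_compact R _ _)). Qed.

Lemma row_box r (y : rating R k) : (forall m, `|y m - v m| <= r) -> box r (\row_m y m).
Proof.
move=> h i /=; rewrite mxE in_itv /=; have := h i; rewrite ler_norml; lra.
Qed.

Lemma f_bound r : 0 <= r -> exists M, 0 <= M /\ forall g y, (forall m, `|y m - v m| <= r) -> f g y <= M.
Proof.
move=> r0.
have ne : box r !=set0.
  by exists (\row_m v m); apply: row_box => m; rewrite subrr normr0.
have H : forall g, exists M, forall u, u \in box r -> f g (fun m => u ord0 m) <= M.
  move=> g.
  have cf : {within box r, continuous (fun u : 'rV[R]_k => f g (fun m => u ord0 m))}.
    by apply: continuous_subspaceT; exact: f_cont.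
  have bc : compact (box r) by exact: box_compact.
  have [c _ hc] := compact_EVT_max ne bc cf.
  by exists (f g (fun m => c ord0 m)).
have [Mf hM] := fin_all_exists H.
have hM' : forall g y, (forall m, `|y m - v m| <= r) -> f g y <= Mf g.
  move=> g y hy.
  have e : (fun m => (\row_m0 y m0) ord0 m) = y by apply/funext => m; rewrite mxE.
  by have := hM g (\row_m y m); rewrite e inE; apply; exact: row_box.
have hv : forall m, `|v m - v m| <= r by move=> m; rewrite subrr normr0.
exists (\sum_g Mf g); split.
  by apply: sumr_ge0 => g _; apply: le_trans (f_ge0 g v) (hM' g v hv).
move=> g y hy.
apply: le_trans (hM' g y hy) _.
rewrite (bigD1 g) //= lerDl; apply: sumr_ge0 => h _.
exact: le_trans (f_ge0 h y) (hM' h y hy).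
Qed.

Lemma L_unif r eps : 0 <= r -> 0 < eps ->
  \forall n \near \oo, forall y, (forall m, `|y m - v m| <= r) -> `|Fn n y - Fw y| <= eps.
Proof.
move=> r0 e0; have [M [M0 hM]] := f_bound r r0.
have c0 : 0 < eps / ((M + 1) * #|G|%:R + 1).
  by apply: divr_gt0 => //; apply: ltr_wpDl => //; apply: mulr_ge0 => //; lra.
have H : forall g, \forall n \near \oo, `|w g - wn n g| < eps / ((M + 1) * #|G|%:R + 1).
  by move=> g; move/cvgrPdist_lt : (wn_cvg g) => /(_ _ c0).
near=> n => y hy.
have hg : forall g, `|w g - wn n g| < eps / ((M + 1) * #|G|%:R + 1).
  by near: n; apply: filter_forall.
rewrite /Fn /Fw -sumrB.
apply: le_trans (ler_norm_sum _ _ _) _.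
apply: le_trans (_ : \sum_(g : G) eps / ((M + 1) * #|G|%:R + 1) * M <= _).
  apply: ler_sum => g _; rewrite -mulrBl normrM (ger0_norm (f_ge0 g y)).
  apply: ler_pM => //; last exact: hM.
  by rewrite distrC; apply: ltW.
set D := (M + 1) * #|G|%:R + 1.
have D0 : 0 < D by rewrite /D; apply: ltr_wpDl => //; apply: mulr_ge0 => //; lra.
rewrite sumr_const -mulr_natr.
have -> : forall a, eps / D * M * a = eps * (M * a / D) by move=> a; ring.
apply: ler_piMr; first exact: ltW.
rewrite ler_pdivrMr // mul1r /D mulrDl mul1r -addrA lerDl.
exact: addr_ge0 (ler0n _ _) ler01.
Unshelve. all: by end_near.
Qed.

Lemma cSum (T : topologicalType) (I : Type) (s : seq I) (F : I -> T -> R) :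
  (forall i, continuous (F i)) -> continuous (fun u => \sum_(i <- s) F i u).
Proof.
move=> hF; elim: s => [|a s IH].
  rewrite (_ : (fun _ => _) = (fun _ => 0)); first exact: cC.
  by apply/funext => u; rewrite big_nil.
rewrite (_ : (fun _ => _) = (fun u => F a u + \sum_(i <- s) F i u)).
  by apply: cD => //; exact: hF.
by apply/funext => u; rewrite big_cons.
Qed.

Lemma Fw_cont : continuous (fun u : 'rV[R]_k => Fw (fun m => u ord0 m)).
Proof.
rewrite /Fw; apply: cSum => g; apply: cM; [exact: cC| exact: f_cont].
Qed.

Definition sgr (s : bool) (r : R) := if s then r else - r.

Definition face (i : 'I_k) (s : bool) (r : R) (j : 'I_k) : set R :=
  if j == m0 then `[v m0, v m0]%classic
  else if j == i then `[v i + sgr s r, v i + sgr s r]%classic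
  else `[v j - r, v j + r]%classic.

Lemma face_compact i s r : compact [set u : 'rV[R]_k | forall j, face i s r j (u ord0 j)].
Proof.
apply: (@rV_compact R k (face i s r)) => j; rewrite /face.
by case: ifP => _; [|case: ifP => _]; exact: segment_compact.
Qed.

Lemma rowK (y : rating R k) : (fun m => (\row_m0 y m0) ord0 m) = y.
Proof. by apply/funext => m; rewrite mxE. Qed.

Lemma L_face r : 0 < r -> exists2 d, 0 < d & forall z, z m0 = v m0 ->
  (forall m, `|z m - v m| <= r) -> (exists i, `|z i - v i| = r) -> Fw v + d <= Fw z.
Proof.
move=> r0.
pose Pf := fun (p : ('I_k * bool)%type) (d : R) => 0 < d /\ (p.1 != m0 ->
  forall u : 'rV[R]_k, (forall j, face p.1 p.2 r j (u ord0 j)) -> Fw v + d <= Fw (fun m => u ord0 m)).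
have H : forall p : ('I_k * bool)%type, exists d : R, Pf p d.
  move=> [i s] /=; case: (eqVneq i m0) => [->|im0].
    by exists 1; split => //; rewrite eqxx.
  pose u0 := \row_j (if j == m0 then v m0 else if j == i then v i + sgr s r else v j).
  have ne : [set u : 'rV[R]_k | forall j, face i s r j (u ord0 j)] !=set0.
    exists u0 => j /=; rewrite /face mxE.
    case: ifP => _; first by rewrite /= in_itv /= lexx.
    case: ifP => _; first by rewrite /= in_itv /= lexx.
    by rewrite /= in_itv /=; apply/andP; split; lra.
  have cf : {within [set u : 'rV[R]_k | forall j, face i s r j (u ord0 j)],
     continuous (fun u : 'rV[R]_k => Fw (fun m => u ord0 m))}.
    by apply: continuous_subspaceT; exact: Fw_cont.
  have [c cin hc] := compact_EVT_min ne (face_compact i s r) cf.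
  exists (Fw (fun m => c ord0 m) - Fw v); split; last first.
    move=> _ u hu; rewrite addrC subrK; apply: hc; rewrite inE; exact: hu.
  rewrite subr_gt0; have := v_min (fun m => c ord0 m); rewrite le_eqVlt => /orP [/eqP e|//].
  have : Fw (fun m => c ord0 m) <= Fw v by rewrite e.
  move/v_uniq => [a ha].
  move: cin; rewrite inE => cin.
  have c0 := cin m0; have ci := cin i; rewrite /face eqxx in c0.
  rewrite /face (negbTE im0) eqxx in ci.
  move: c0 ci => /= c0 ci; rewrite !in_itv /= !ha in c0 ci.
  case/andP: c0 => h1 h2; case/andP: ci => h3 h4.
  by clear u0 ne cf hc cin; move: h3 h4; rewrite /sgr; case: s => /= h3 h4; lra.
have [df hdf] := fin_all_exists H.
have dpos : forall p, 0 < df p by move=> p; case: (hdf p).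
pose S := \sum_p (df p)^-1.
have Sge : forall p, (df p)^-1 <= S.
  move=> p; rewrite /S (bigD1 p) //= lerDl; apply: sumr_ge0 => q _.
  by rewrite invr_ge0; apply: ltW.
have S0 : 0 < S by apply: lt_le_trans (Sge (m0, true)); rewrite invr_gt0.
exists S^-1; first by rewrite invr_gt0.
move=> z zm0 zb [i zi].
have im0 : i != m0.
  by apply/eqP => e; move: zi; rewrite e zm0 subrr normr0 => e'; move: r0; rewrite -e' ltxx.
pose s := v i <= z i.
have hp := hdf (i, s); case: hp => _ /(_ im0 (\row_m z m)); rewrite rowK => hz.
apply: le_trans (hz _).
  rewrite lerD2l -[df _]invrK lef_pV2 ?posrE ?invr_gt0 //; exact: Sge.
move=> j; rewrite mxE /face /=.
case: ifP => [/eqP ->|_]; first by rewrite /= zm0 in_itv /= lexx.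
case: ifP => [/eqP ->|_].
  rewrite /= in_itv /=; move: zi; rewrite /s /sgr.
  case: (lerP (v i) (z i)) => h.
    by move=> <-; rewrite addrC subrK lexx.
  by move=> <-; rewrite opprB addrC subrK lexx.
by rewrite /= in_itv /=; have := zb j; rewrite ler_norml => /andP [? ?]; apply/andP; split; lra.
Qed.

Lemma fin_argmax (I : finType) (i0 : I) (F : I -> R) : exists i, forall j, F j <= F i.
Proof.
case: (@arg_maxP _ R I i0 xpredT F isT) => i _ h; exists i => j; exact: h.
Qed.

Lemma K1 r : 0 < r -> exists2 eta, 0 < eta & \forall n \near \oo, forall y,
  (exists m, r <= `|nrm y m - v m|) -> Fn n v + eta <= Fn n y.
Proof.
move=> r0; have [d d0 hd] := L_face r r0.
have d4 : 0 < d / 4 by apply: divr_gt0.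
have HU := L_unif r (d / 4) (ltW r0) d4.
exists (d / 2); first by apply: divr_gt0.
near=> n => y [m hm].
have hu : forall y, (forall m, `|y m - v m| <= r) -> `|Fn n y - Fw y| <= d / 4.
  by near: n; exact: HU.
set yt := nrm y.
have yt0 : yt m0 = v m0 by rewrite /yt /nrm; ring.
have [i imax] := fin_argmax _ m0 (fun j => `|yt j - v j|).
set D := `|yt i - v i|.
have rD : r <= D by apply: le_trans hm (imax m).
have D0 : 0 < D by apply: lt_le_trans rD.
set t := r / D.
have t0 : 0 < t by apply: divr_gt0.
have t1 : t <= 1 by rewrite /t ler_pdivrMr // mul1r.
set z := fun m => (1 - t) * v m + t * yt m.
have zv : forall m, z m - v m = t * (yt m - v m) by move=> j; rewrite /z; ring.
have hzb : forall m, `|z m - v m| <= r.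
  move=> j; rewrite zv normrM (gtr0_norm t0).
  have := imax j => /= hj.
  apply: le_trans (ler_wpM2l (ltW t0) hj) _.
  by rewrite /t mulfVK ?gt_eqF.
have hzi : `|z i - v i| = r by rewrite zv normrM (gtr0_norm t0) /t -/D mulfVK ?gt_eqF.
have hz0 : z m0 = v m0 by rewrite /z yt0; ring.
have hF := hd z hz0 hzb (ex_intro _ i hzi).
have hvb : forall m, `|v m - v m| <= r by move=> j; rewrite subrr normr0 ltW.
have h1 := hu z hzb; have h2 := hu v hvb.
have hc := Fn_conv n v yt t (ltW t0) t1.
rewrite -/z in hc.
rewrite -(Fn_nrm n y) -/yt.
move: h1 h2; rewrite !ler_norml => /andP [h1 h1'] /andP [h2 h2'].
have key : d / 2 <= t * (Fn n yt - Fn n v) by lra.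
nra.
Unshelve. all: by end_near.
Qed.

Lemma K2 eps : 0 < eps -> \forall n \near \oo, forall y, Fn n v - eps <= Fn n y.
Proof.
move=> e0; have [eta eta0 HK] := K1 1 ltr01.
have e2 : 0 < eps / 2 by apply: divr_gt0.
have HU := L_unif 1 (eps / 2) ler01 e2.
near=> n.
have hk : forall y, (exists m, 1 <= `|nrm y m - v m|) -> Fn n v + eta <= Fn n y.
  by near: n; exact: HK.
have hu : forall y, (forall m, `|y m - v m| <= 1) -> `|Fn n y - Fw y| <= eps / 2.
  by near: n; exact: HU.
move=> y.
case: (pselect (exists m, 1 <= `|nrm y m - v m|)) => [far|nfar].
  have := hk y far; lra.
have hb : forall m, `|nrm y m - v m| <= 1.
  move=> m; case: (lerP `|nrm y m - v m| 1) => // h; exfalso; apply: nfar.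
  by exists m; apply: ltW.
have hvb : forall m, `|v m - v m| <= 1 by move=> j; rewrite subrr normr0 ler01.
have h1 := hu _ hb; have h2 := hu v hvb.
have h3 := v_min (nrm y).
rewrite -(Fn_nrm n y).
move: h1 h2; rewrite !ler_norml => /andP [h1 h1'] /andP [h2 h2'].
lra.
Unshelve. all: by end_near.
Qed.

Lemma cvg_of_near (x : nat -> rating R k) :
  (forall eps, 0 < eps -> \forall n \near \oo, Fn n (x n) <= Fn n v + eps) ->
  cvg_up_to_const x v.
Proof.
move=> hx; exists (fun n => v m0 - x n m0) => m.
apply/cvgrPdist_lt => e e0.
have [eta eta0 HK] := K1 e e0.
have eta2 : 0 < eta / 2 by apply: divr_gt0.
have Hx := hx _ eta2.
near=> n.
rewrite ltNge; apply/negP => h.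
have hk : Fn n v + eta <= Fn n (x n).
  have : (exists m, e <= `|nrm (x n) m - v m|).
    by exists m; rewrite distrC /nrm.
  by near: n; apply: filterS HK => n; apply.
have hxn : Fn n (x n) <= Fn n v + eta / 2 by near: n; exact: Hx.
lra.
Unshelve. all: by end_near.
Qed.
End MEst.
Section Prob.
Variables (R : realType) (d : measure_display) (Omega : measurableType d)
  (P : probability Omega R) (V : finType) (X : nat -> Omega -> V) (p : V -> R).
Hypothesis hiid : iid_seq P X p.

Definition cyl n (vv : 'I_n -> V) : set Omega :=
  \bigcap_(i in [set j : 'I_n | True]) (X i @^-1` [set vv i]).

Lemma cyl_meas n vv : measurable (cyl n vv).
Proof.
apply: fin_bigcap_measurable; first exact: finite_finset.
by move=> i _; case: hiid => h _; exact: h.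
Qed.

Lemma P_cyl n vv : P (cyl n vv) = (\prod_(i < n) p (vv i))%:E.
Proof. by case: hiid => _ h; exact: h. Qed.

Lemma cyl1 a : cyl 1 (fun _ => a) = X 0 @^-1` [set a].
Proof.
apply/seteqP; split => w /=.
  by move=> h; exact: (h ord0 I).
by move=> h i _; rewrite (ord1 i).
Qed.

Lemma p_ge0 a : 0 <= p a.
Proof.
have := P_cyl 1 (fun _ => a); rewrite big_ord1 => e.
by rewrite -lee_fin -e measure_ge0.
Qed.

Lemma mem_bigsetU (I : eqType) (s : seq I) (F : I -> set Omega) a :
  a \in s -> F a `<=` \big[setU/set0]_(b <- s) F b.
Proof.
elim: s => [//|b s IH]; rewrite in_cons big_cons => /orP [/eqP ->|h] w hw.
  by left.
by right; exact: IH.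
Qed.

Lemma P_disj_union (s : seq V) : uniq s ->
  P (\big[setU/set0]_(a <- s) (X 0 @^-1` [set a])) = (\sum_(a <- s) P (X 0 @^-1` [set a]))%E.
Proof.
have mX : forall a, measurable (X 0 @^-1` [set a]) by move=> a; case: hiid => h _; exact: h.
elim: s => [_|a s IH]; first by rewrite !big_nil measure0.
rewrite cons_uniq => /andP [ans us]; rewrite !big_cons measureU //.
- by congr (_ + _)%E; exact: (IH us).
- by apply: bigsetU_measurable => i _.
apply/seteqP; split => w //= [hw].
elim: s ans {IH us} => [|b s IH]; first by rewrite big_nil.
rewrite in_cons negb_or big_cons => /andP [ab ans] [hb|hs].
  by move: ab; rewrite -hw -hb eqxx.
exact: IH.
Qed.

Lemma PX0 a : P (X 0 @^-1` [set a]) = (p a)%:E.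
Proof. by rewrite -cyl1 P_cyl big_ord1. Qed.

Lemma p_sum1 : \sum_a p a = 1.
Proof.
have : P (\big[setU/set0]_(a <- index_enum V) X 0 @^-1` [set a]) = 1%E.
  rewrite (_ : \big[setU/set0]_(a <- _) _ = setT) ?probability_setT //.
  apply/seteqP; split => // w _.
  exact: (mem_bigsetU _ _ (fun a => X 0 @^-1` [set a]) _ (mem_index_enum (X 0 w)) w erefl).
rewrite P_disj_union ?index_enum_uniq //.
under eq_bigr do rewrite PX0.
by rewrite sumEFin => /eqP; rewrite eqe => /eqP.
Qed.

Lemma p_le1 a : p a <= 1.
Proof.
rewrite -p_sum1 (bigD1 a) //= lerDl; apply: sumr_ge0 => b _; exact: p_ge0.
Qed.

Lemma chernoff_comb n (Y : V -> R) lam t : 0 <= lam ->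
  \sum_(vv : {ffun 'I_n -> V} | t <= \sum_(i < n) Y (vv i)) \prod_(i < n) p (vv i)
  <= expR (- (lam * t)) * (\sum_a p a * expR (lam * Y a)) ^+ n.
Proof.
move=> l0.
have pp : forall vv : {ffun 'I_n -> V}, 0 <= \prod_(i < n) p (vv i).
  by move=> vv; apply: prodr_ge0 => i _; exact: p_ge0.
apply: le_trans (_ : \sum_(vv : {ffun 'I_n -> V})
   (\prod_(i < n) p (vv i)) * expR (lam * (\sum_(i < n) Y (vv i) - t)) <= _).
  rewrite [X in _ <= X](bigID (fun vv : {ffun 'I_n -> V} => t <= \sum_(i < n) Y (vv i))) /=.
  apply: ler_wpDr.
    apply: sumr_ge0 => vv _; apply: mulr_ge0 => //; exact: ltW (expR_gt0 _).
  apply: ler_sum => vv h; apply: ler_peMr => //.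
  apply: le_trans (expR_ge1Dx _); rewrite lerDl; apply: mulr_ge0 => //.
  by rewrite subr_ge0.
apply: eqle.
rewrite [X in _ = _ * X](_ : _ = \prod_(i < n) \sum_a p a * expR (lam * Y a)); last first.
  by rewrite prodr_const card_ord.
rewrite bigA_distr_bigA /= mulr_sumr; apply: eq_bigr => vv _.
rewrite big_split /=.
have -> : expR (lam * (\sum_(i < n) Y (vv i) - t)) =
   expR (- (lam * t)) * \prod_(i < n) expR (lam * Y (vv i)).
  by rewrite -expR_sum -expRD mulrBr mulr_sumr addrC.
ring.
Qed.

Lemma mgf_bound (Y : V -> R) lam : \sum_a p a * Y a = 0 -> (forall a, `|Y a| <= 1) ->
  0 <= lam -> lam <= 2^-1 -> \sum_a p a * expR (lam * Y a) <= expR (2 * lam ^+ 2).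
Proof.
move=> hY0 hY1 l0 l1.
apply: le_trans (_ : \sum_a p a * (1 + lam * Y a + 2 * lam ^+ 2) <= _).
  apply: ler_sum => a _; apply: ler_wpM2l; first exact: p_ge0.
  have hy := hY1 a.
  have hl : `|lam * Y a| <= 2^-1.
    rewrite normrM (ger0_norm l0); apply: le_trans (_ : lam * 1 <= _); last by rewrite mulr1.
    exact: ler_wpM2l.
  apply: le_trans (expR_le_quad _ hl) _.
  rewrite lerD2l exprMn; apply: ler_wpM2l => //; apply: ler_piMr; first exact: sqr_ge0.
  by move: hy; rewrite ler_norml => /andP [h1 h2]; nra.
rewrite (eq_bigr (fun a => p a + lam * (p a * Y a) + 2 * lam ^+ 2 * p a)); last first.
  by move=> a _; ring.
rewrite !big_split /= -mulr_sumr -mulr_sumr hY0 p_sum1 mulr0 addr0 mulr1.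
exact: expR_ge1Dx.
Qed.

Definition Ev (Y : V -> R) (eps : R) n : set Omega :=
  \big[setU/set0]_(vv : {ffun 'I_n -> V} | n%:R * eps <= \sum_(i < n) Y (vv i)) cyl n vv.

Lemma Ev_meas Y eps n : measurable (Ev Y eps n).
Proof. by apply: bigsetU_measurable => vv _; exact: cyl_meas. Qed.

Lemma mu_bigsetU_le (I : Type) (s : seq I) (Pr : pred I) (F : I -> set Omega) :
  (forall i, measurable (F i)) ->
  (P (\big[setU/set0]_(i <- s | Pr i) F i) <= \sum_(i <- s | Pr i) P (F i))%E.
Proof.
move=> mF; elim: s => [|a s IH]; first by rewrite !big_nil measure0.
rewrite !big_cons; case: (Pr a) => //.
apply: le_trans (measureU2 _ _ _) _ => //.
  by apply: bigsetU_measurable => i _.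
exact: leeD.
Qed.

Lemma P_Ev_le Y eps n : \sum_a p a * Y a = 0 -> (forall a, `|Y a| <= 1) ->
  0 < eps -> eps <= 2 ->
  (P (Ev Y eps n) <= (expR (- (eps ^+ 2 / 8)) ^+ n)%:E)%E.
Proof.
move=> hY0 hY1 e0 e2.
rewrite /Ev; have := mu_bigsetU_le _ (index_enum _) (fun vv : {ffun 'I_n -> V} => n%:R * eps <= \sum_(i < n) Y (vv i)) (fun vv => cyl n vv) (fun vv => cyl_meas n vv).
move/le_trans; apply.
rewrite (eq_bigr (fun vv : {ffun 'I_n -> V} => (\prod_(i < n) p (vv i))%:E)); last first.
  by move=> vv _; exact: P_cyl.
rewrite sumEFin lee_fin.
have l0 : 0 <= eps / 4 by apply: divr_ge0 => //; exact: ltW.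
have l1 : eps / 4 <= 2^-1 by lra.
apply: le_trans (chernoff_comb n Y (eps / 4) (n%:R * eps) l0) _.
have M0 : 0 <= \sum_a p a * expR (eps / 4 * Y a).
  by apply: sumr_ge0 => a _; apply: mulr_ge0; [exact: p_ge0| exact: ltW (expR_gt0 _)].
apply: le_trans (_ : expR (- (eps / 4 * (n%:R * eps))) * expR (2 * (eps / 4) ^+ 2) ^+ n <= _).
  rewrite ler_pM2l ?expR_gt0 //.
  have E0 : 0 <= expR (2 * (eps / 4) ^+ 2) by exact: ltW (expR_gt0 _).
  apply: lerXn2r; rewrite ?nnegrE //.
  exact: (mgf_bound Y (eps / 4) hY0 hY1 l0 l1).
by rewrite -!expRM_natl -expRD; apply: eqle; congr expR; field.
Qed.

Lemma notin_Ev Y eps n w : ~ Ev Y eps n w -> \sum_(i < n) Y (X i w) < n%:R * eps.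
Proof.
move=> hw; rewrite ltNge; apply/negP => h; apply: hw.
pose v0 := [ffun i : 'I_n => X i w].
have hv0 : n%:R * eps <= \sum_(i < n) Y (v0 i).
  by under eq_bigr do rewrite ffunE.
rewrite /Ev (bigD1 v0) //=; left.
by move=> i _ /=; rewrite ffunE.
Qed.

Lemma geo_fin (rho : R) : 0 < rho -> rho < 1 -> (\sum_(n <oo) (rho ^+ n)%:E < +oo)%E.
Proof.
move=> r0 r1.
apply: (@le_lt_trans _ _ ((1 - rho)^-1)%:E); last exact: ltry.
apply: lime_le.
  by apply: is_cvg_nneseries => n _ _; rewrite lee_fin exprn_ge0 // ltW.
apply: nearW => n.
rewrite sumEFin lee_fin.
have rn : `|rho| < 1 by rewrite gtr0_norm.
have := @geometric_le_lim R n 1 rho ler01 r0 rn.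
by rewrite mul1r /series /geometric /=; under eq_bigr do rewrite mul1r.
Qed.

Lemma ae_upper Y eps : \sum_a p a * Y a = 0 -> (forall a, `|Y a| <= 1) ->
  0 < eps -> eps <= 2 ->
  {ae P, forall w, \forall n \near \oo, \sum_(i < n) Y (X i w) < n%:R * eps}.
Proof.
move=> hY0 hY1 e0 e2.
set rho := expR (- (eps ^+ 2 / 8)).
have r0 : 0 < rho by exact: expR_gt0.
have r1 : rho < 1.
  rewrite /rho -expR0 ltr_expR oppr_lt0; apply: divr_gt0 => //; exact: exprn_gt0.
exists (lim_sup_set (Ev Y eps)); split.
- apply: bigcapT_measurable => n; apply: bigcup_measurable => j _; exact: Ev_meas.
- apply: lim_sup_set_cvg0; first by move=> n; exact: Ev_meas.
  apply: le_lt_trans (geo_fin rho r0 r1).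
  apply: lee_nneseries => [n _ _|n _]; first exact: measure_ge0.
  exact: P_Ev_le.
- move=> w /= hw N _.
  apply: contrapT => hno; apply: hw.
  exists N => // j /= hj; apply: notin_Ev => hE; apply: hno; by exists j.
Qed.

Lemma slln (Y : V -> R) : \sum_a p a * Y a = 0 -> (forall a, `|Y a| <= 1) ->
  {ae P, forall w, (fun n => (\sum_(i < n) Y (X i w)) / n%:R) @ \oo --> 0}.
Proof.
move=> hY0 hY1.
have hN0 : \sum_a p a * (- Y a) = 0.
  by rewrite (eq_bigr (fun a => - (p a * Y a))) ?sumrN ?hY0 ?oppr0 // => a _; ring.
have hN1 : forall a, `|- Y a| <= 1 by move=> a; rewrite normrN.
have ej : forall j : nat, 0 < (j.+1%:R : R)^-1 by move=> j; rewrite invr_gt0.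
have ej2 : forall j : nat, (j.+1%:R : R)^-1 <= 2.
  move=> j; apply: le_trans (_ : 1 <= 2); last by lra.
  by rewrite invf_le1 // ler1n.
have H : forall j, {ae P, forall w,
   (\forall n \near \oo, \sum_(i < n) Y (X i w) < n%:R * (j.+1%:R)^-1) /\
   (\forall n \near \oo, \sum_(i < n) - Y (X i w) < n%:R * (j.+1%:R)^-1)}.
  move=> j.
  have A1 := ae_upper Y _ hY0 hY1 (ej j) (ej2 j).
  have A2 := ae_upper (fun a => - Y a) _ hN0 hN1 (ej j) (ej2 j).
  by apply: filterS2 A1 A2 => w h1 h2; split.
have := ae_foralln H.
apply: filterS => w hw.
apply/cvgrPdist_lt => e e0.
have [N _ HN] := near_infty_natSinv_lt (PosNum e0).
have hjN := HN N (leqnn N).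
case: (hw N) => h1 h2.
near=> n.
have n1 : (0 < n)%N by near: n; exists 1%N.
have a1 : \sum_(i < n) Y (X i w) < n%:R * (N.+1%:R)^-1 by near: n; exact: h1.
have a2 : \sum_(i < n) - Y (X i w) < n%:R * (N.+1%:R)^-1 by near: n; exact: h2.
rewrite sumrN in a2.
have n0 : 0 < (n%:R : R) by rewrite ltr0n.
have ni : 0 < (n%:R : R)^-1 by rewrite invr_gt0.
rewrite sub0r normrN normrM (gtr0_norm ni).
rewrite ltr_pdivrMr //.
apply: lt_le_trans (_ : n%:R * (N.+1%:R)^-1 <= _).
  move: a1 a2; set S := \sum_(i < n) _; set q := n%:R / _; move=> a1 a2.
  by rewrite ltr_norml; apply/andP; split; lra.
by rewrite mulrC ler_pM2r //; exact: ltW hjN.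
Unshelve. all: by end_near.
Qed.

Lemma freq_cvg : {ae P, forall w, forall a,
  (fun n => (\sum_(i < n) ((X i w == a)%:R : R)) / n%:R) @ \oo --> p a}.
Proof.
apply: filter_forall => a.
pose Y b := ((b == a)%:R : R) - p a.
have hY0 : \sum_b p b * Y b = 0.
  rewrite /Y (eq_bigr (fun b => p b * (b == a)%:R - p a * p b)); last by move=> b _; ring.
  rewrite sumrB -mulr_sumr p_sum1 mulr1 (bigD1 a) //= eqxx mulr1 big1 ?addr0 ?subrr //.
  by move=> b /negbTE ->; rewrite mulr0.
have hY1 : forall b, `|Y b| <= 1.
  move=> b; rewrite /Y; have := p_ge0 a; have := p_le1 a.
  by case: (b == a) => /= h1 h2; rewrite ler_norml; apply/andP; split; lra.
apply: filterS (slln Y hY0 hY1) => w h.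
apply/cvgrPdist_lt => e e0; move/cvgrPdist_lt: h => /(_ e e0) h.
near=> n.
have n1 : (0 < n)%N by near: n; exists 1%N.
have hn : `|0 - (\sum_(i < n) Y (X i w)) / n%:R| < e by near: n; exact: h.
have n0 : (n%:R : R) != 0 by rewrite pnatr_eq0 -lt0n.
suff -> : p a - (\sum_(i < n) ((X i w == a)%:R : R)) / n%:R =
   0 - (\sum_(i < n) Y (X i w)) / n%:R by [].
rewrite /Y sumrB sumr_const card_ord -mulr_natr.
by field.
Unshelve. all: by end_near.
Qed.
End Prob.
Section Final.
Variables (R : realType) (k : nat) (Omega : Type) (X : nat -> Omega -> game k * bool)
  (p : game k * bool -> R) (w : Omega).
Hypothesis pge0 : forall a, 0 <= p a.
Hypothesis hfreq : forall a,
  (fun n => (\sum_(i < n) ((X i w == a)%:R : R)) / n%:R) @ \oo --> p a.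

Definition Nc n a : R := \sum_(i < n) ((X i w == a)%:R : R).
Definition wb b n g : R := Nc n (g, b) / n%:R.

Lemma loss_count (c : game k * bool -> bool) n (F : game k * bool -> R) :
  \sum_(i <- iota 0 n | c (X i w)) F (X i w) = \sum_(a | c a) Nc n a * F a.
Proof.
rewrite /Nc; under [RHS]eq_bigr do rewrite mulr_suml.
rewrite exchange_big /=.
have -> : iota 0 n = index_iota 0 n by rewrite /index_iota subn0.
rewrite big_mkcond big_mkord; apply: eq_bigr => i _.
case: ifP => cx.
  rewrite (bigD1 (X i w)) //= eqxx mul1r big1 ?addr0 // => a /andP [_ ax].
  by rewrite eq_sym (negbTE ax) mul0r.
rewrite big1 // => a ca.
have : X i w != a by apply/eqP => e; rewrite e ca in cx.
by move/negbTE ->; rewrite mul0r.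
Qed.

Lemma sum_pair (c : bool -> bool) (H : game k * bool -> R) :
  \sum_(a | c a.2) H a =
  \sum_g ((if c true then H (g, true) else 0) + (if c false then H (g, false) else 0)).
Proof.
rewrite big_mkcond /=.
rewrite (eq_bigr (fun g => \sum_(bb : bool) (if c bb then H (g, bb) else 0))); last first.
  by move=> g _; rewrite big_bool.
rewrite pair_bigA /=; by apply: eq_bigr => -[g bb] _.
Qed.

Lemma loss_task n y : loss (D_task X n w) y = \sum_g Nc n (g, true) * game_loss g y.
Proof.
rewrite /loss /D_task big_map big_filter.
rewrite (loss_count (fun a => a.2) n (fun a => game_loss a.1 y)).
rewrite (sum_pair id (fun a => Nc n a * game_loss a.1 y)) /=.
by apply: eq_bigr => g _; rewrite addr0.
Qed.

Lemma loss_ntask n y : loss (D_ntask X n w) y = \sum_g Nc n (g, false) * game_loss g y.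
Proof.
rewrite /loss /D_ntask big_map big_filter.
rewrite (loss_count (fun a => ~~ a.2) n (fun a => game_loss a.1 y)).
rewrite (sum_pair negb (fun a => Nc n a * game_loss a.1 y)) /=.
by apply: eq_bigr => g _; rewrite add0r.
Qed.

Definition Fb b n y := Fn R k (game k) (@game_loss R k) (wb b) n y.

Lemma lossE_gen n y b : (0 < n)%N ->
  \sum_g Nc n (g, b) * game_loss g y = n%:R * Fb b n y.
Proof.
move=> n0; rewrite /Fb /Fn /wb mulr_sumr; apply: eq_bigr => g _.
have : (n%:R : R) != 0 by rewrite pnatr_eq0 -lt0n.
by move=> h; field.
Qed.

Lemma wb_ge0 b n g : 0 <= wb b n g.
Proof.
by rewrite /wb /Nc divr_ge0 // sumr_ge0 // => i _; exact: ler0n.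
Qed.

Lemma wb_cvg b g : (fun n => wb b n g) @ \oo --> p (g, b).
Proof. exact: hfreq. Qed.

Definition Sb b := \sum_(h : game k) p (h, b).

Lemma Fw_exp b y : 0 < Sb b ->
  Fw R k (game k) (@game_loss R k) (fun g => p (g, b)) y = Sb b * exp_loss p b y.
Proof.
move=> S0; rewrite /Fw /exp_loss mulr_sumr; apply: eq_bigr => g _.
rewrite -/(Sb b); have := S0; rewrite lt0r => /andP [h _]; by field.
Qed.

Section Side.
Variables (b : bool) (v : rating R k) (m0 : 'I_k).
Hypothesis S0 : 0 < Sb b.
Hypothesis hopt : optimal_up_to_const (exp_loss p b) v.

Lemma side_vmin y : Fw R k (game k) (@game_loss R k) (fun g => p (g, b)) v <=
  Fw R k (game k) (@game_loss R k) (fun g => p (g, b)) y.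
Proof.
rewrite !Fw_exp // ler_pM2l //.
have : is_minimizer (exp_loss p b) v by apply/hopt; exists 0 => m; rewrite addr0.
by apply.
Qed.

Lemma side_vuniq y : Fw R k (game k) (@game_loss R k) (fun g => p (g, b)) y <=
  Fw R k (game k) (@game_loss R k) (fun g => p (g, b)) v -> exists c, forall m, y m = v m + c.
Proof.
rewrite !Fw_exp // ler_pM2l // => h.
have hv : is_minimizer (exp_loss p b) v by apply/hopt; exists 0 => m; rewrite addr0.
apply/hopt => z; exact: le_trans h (hv z).
Qed.

Lemma side_K2 eps : 0 < eps -> \forall n \near \oo, forall y, Fb b n v - eps <= Fb b n y.
Proof.
exact: (K2 R k (game k) (@game_loss R k) (@game_loss_ge0 R k) (@game_loss_shift R k)
  (@game_loss_conv R k) (@game_loss_continuous R k) (wb b) (fun g => p (g, b)) v m0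
  (wb_ge0 b) (wb_cvg b) side_vmin side_vuniq eps).
Qed.

Lemma side_cvg (x : nat -> rating R k) :
  (forall eps, 0 < eps -> \forall n \near \oo, Fb b n (x n) <= Fb b n v + eps) ->
  cvg_up_to_const x v.
Proof.
exact: (cvg_of_near R k (game k) (@game_loss R k) (@game_loss_ge0 R k) (@game_loss_shift R k)
  (@game_loss_conv R k) (@game_loss_continuous R k) (wb b) (fun g => p (g, b)) v m0
  (wb_ge0 b) (wb_cvg b) side_vmin side_vuniq x).
Qed.
End Side.
End Final.
Lemma ev_ge (R : realType) (c e : R) : 0 < e -> \forall n \near \oo, c <= n%:R * e.
Proof.
move=> e0; exists (Num.truncn (c / e)).+1 => // n /= hn.
rewrite -ler_pdivrMr //; apply: ltW; apply: lt_le_trans (truncnS_gt _) _.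
by rewrite ler_nat.
Qed.

Theorem mainTheorem3 (R : realType) (k : nat) (d : measure_display)
  (Omega : measurableType d) (P : probability Omega R)
  (X : nat -> Omega -> game k * bool) (p : game k * bool -> R)
  (sn s1 : R) (Rstar_task Rstar_ntask : rating R k) :
  iid_seq P X p ->
  0 < \sum_(g : game k) p (g, true) ->
  0 < \sum_(g : game k) p (g, false) ->
  0 < sn -> 0 < s1 ->
  optimal_up_to_const (exp_loss p true) Rstar_task ->
  optimal_up_to_const (exp_loss p false) Rstar_ntask ->
  {ae P, forall w : Omega,
    (forall Rt : nat -> rating R k,
       (\forall n \near \oo, is_minimizer (loss (D_task X n w)) (Rt n)) ->
       cvg_up_to_const Rt Rstar_task) /\
    (forall Rn : nat -> rating R k,
       (\forall n \near \oo, is_minimizer (loss (D_ntask X n w)) (Rn n)) ->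
       cvg_up_to_const Rn Rstar_ntask) /\
    (forall Rp : nat -> rating R k * rating R k,
       (\forall n \near \oo,
          is_minimizer (polyrating_obj sn s1 (D_ntask X n w) (D_task X n w)) (Rp n)) ->
       cvg_up_to_const (fun n m => (Rp n).1 m + (Rp n).2 m) Rstar_task /\
       cvg_up_to_const (fun n => (Rp n).1) Rstar_ntask)}.
Proof.
move=> hiid St Sf sn0 s10 ot on.
case: (pickP (fun _ : game k => true)) => [g0 _|h]; last first.
  by move: St; rewrite big1 ?ltxx // => g; have := h g.
pose m0 := gma g0.
apply: filterS (freq_cvg R d Omega P (game k * bool)%type X p hiid) => w hw.
have hK2t := side_K2 R k Omega X p w hw true Rstar_task m0 St ot.
have hK2n := side_K2 R k Omega X p w hw false Rstar_ntask m0 Sf on.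
have hCt := side_cvg R k Omega X p w hw true Rstar_task m0 St ot.
have hCn := side_cvg R k Omega X p w hw false Rstar_ntask m0 Sf on.
split; [|split].
- move=> Rt hmin; apply: hCt => eps e0.
  near=> n.
  have n1 : (0 < n)%N by near: n; exists 1%N.
  have hm : is_minimizer (loss (D_task X n w)) (Rt n) by near: n.
  have := hm Rstar_task.
  rewrite !loss_task !lossE_gen // ler_pM2l ?ltr0n // => h; lra.
- move=> Rn hmin; apply: hCn => eps e0.
  near=> n.
  have n1 : (0 < n)%N by near: n; exists 1%N.
  have hm : is_minimizer (loss (D_ntask X n w)) (Rn n) by near: n.
  have := hm Rstar_ntask.
  rewrite !loss_ntask !lossE_gen // ler_pM2l ?ltr0n // => h; lra.
move=> Rp hmin.
pose z : rating R k * rating R k := (Rstar_ntask, fun m => Rstar_task m - Rstar_ntask m).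
pose Q (x : rating R k * rating R k) := \sum_(m < k) (x.1 m) ^+ 2 / (2 * sn ^+ 2)
  + \sum_(m < k) (x.2 m) ^+ 2 / (2 * s1 ^+ 2).
have Q0 : forall x, 0 <= Q x.
  move=> x; apply: addr_ge0; apply: sumr_ge0 => j _; apply: divr_ge0;
    (try exact: sqr_ge0); apply: mulr_ge0; (try exact: sqr_ge0); exact: ler0n.
have zt : (fun m => z.1 m + z.2 m) = Rstar_task.
  by apply/funext => j /=; rewrite addrC subrK.
have key : forall n, (0 < n)%N ->
   is_minimizer (polyrating_obj sn s1 (D_ntask X n w) (D_task X n w)) (Rp n) ->
   n%:R * Fb R k Omega X w false n (Rp n).1 +
   n%:R * Fb R k Omega X w true n (fun m => (Rp n).1 m + (Rp n).2 m) + Q (Rp n) <=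
   n%:R * Fb R k Omega X w false n Rstar_ntask +
   n%:R * Fb R k Omega X w true n Rstar_task + Q z.
  move=> n n1 hm; have := hm z.
  rewrite /polyrating_obj zt !loss_task !loss_ntask !lossE_gen //.
  by rewrite /Q !addrA.
split.
- apply: (hCt (fun n m => (Rp n).1 m + (Rp n).2 m)) => eps e0.
  have e2 : 0 < eps / 2 by apply: divr_gt0.
  have hq := ev_ge R (Q z) (eps / 2) e2.
  have hk := hK2n _ e2.
  near=> n.
  have n1 : (0 < n)%N by near: n; exists 1%N.
  have hm : is_minimizer (polyrating_obj sn s1 (D_ntask X n w) (D_task X n w)) (Rp n)
    by near: n.
  have h1 := key n n1 hm.
  have h2 : Q z <= n%:R * (eps / 2) by near: n.
  have h3 : forall y, Fb R k Omega X w false n Rstar_ntask - eps / 2 <=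
     Fb R k Omega X w false n y by near: n.
  have N0 : 0 < (n%:R : R) by rewrite ltr0n.
  have h4 := ler_wpM2l (ltW N0) (h3 (Rp n).1).
  have h5 := Q0 (Rp n).
  rewrite -(ler_pM2l N0).
  move: h1 h2 h4 h5.
  set A := Fb _ _ _ _ _ false n (Rp n).1.
  set A0 := Fb _ _ _ _ _ false n Rstar_ntask.
  set B := Fb _ _ _ _ _ true n _.
  set B0 := Fb _ _ _ _ _ true n Rstar_task.
  move=> h1 h2 h4 h5.
  rewrite mulrBr in h4; rewrite mulrDr; lra.
- apply: (hCn (fun n => (Rp n).1)) => eps e0.
  have e2 : 0 < eps / 2 by apply: divr_gt0.
  have hq := ev_ge R (Q z) (eps / 2) e2.
  have hk := hK2t _ e2.
  near=> n.
  have n1 : (0 < n)%N by near: n; exists 1%N.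
  have hm : is_minimizer (polyrating_obj sn s1 (D_ntask X n w) (D_task X n w)) (Rp n)
    by near: n.
  have h1 := key n n1 hm.
  have h2 : Q z <= n%:R * (eps / 2) by near: n.
  have h3 : forall y, Fb R k Omega X w true n Rstar_task - eps / 2 <=
     Fb R k Omega X w true n y by near: n.
  have N0 : 0 < (n%:R : R) by rewrite ltr0n.
  have h4 := ler_wpM2l (ltW N0) (h3 (fun m => (Rp n).1 m + (Rp n).2 m)).
  have h5 := Q0 (Rp n).
  rewrite -(ler_pM2l N0).
  move: h1 h2 h4 h5.
  set A := Fb _ _ _ _ _ false n (Rp n).1.
  set A0 := Fb _ _ _ _ _ false n Rstar_ntask.
  set B := Fb _ _ _ _ _ true n _.
  set B0 := Fb _ _ _ _ _ true n Rstar_task.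
  move=> h1 h2 h4 h5.
  rewrite mulrBr in h4; rewrite mulrDr; lra.
Unshelve. all: by end_near.
Qed.
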